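(* Let $F\colon \mathbb{R}^n \to \mathbb{R}$ be a differentiable function (a deep neural network) that is strictly positive homogeneous of degree $k \in \mathbb{R}$ with $k \geq 1$, i.e. $F(\alpha x) = \alpha^k F(x)$ for all $x \in \mathbb{R}^n$ and all $\alpha \in \mathbb{R}_{>0}$. Then for every $x\in\mathbb{R}^n$ and every $i\in\{1,\dots,n\}$, the Integrated Gradients attribution $\mathrm{IG}_i(F, x, \mathbf{0})$ with respect to the zero baseline $\mathbf{0}\in\mathbb{R}^n$ admits a closed-form expression requiring only one forward/backward pass, i.e. an explicit expression in terms of $x$ and the single gradient $\nabla F(x)$.
   Context: For a differentiable $F\colon\mathbb{R}^n\to\mathbb{R}$, input $x\in\mathbb{R}^n$ and the zero baseline, Integrated Gradients along the $i$-th dimension (using the straight-line path $\gamma(\alpha)=\alpha x$) is defined as $\mathrm{IG}_i(F,x,\mathbf{0}) = \int_0^1 \frac{\partial F(\gamma(\alpha))}{\partial \gamma_i(\alpha)}\,\frac{\partial \gamma_i(\alpha)}{\partial \alpha}\,d\alpha = \int_0^1 \frac{\partial F}{\partial x_i}(\alpha x)\, x_i\, d\alpha$. ''Requiring only one forward/backward pass'' means the quantity can be computed from a single evaluation of $F$ and its gradient $\nabla F$ at the point $x$ (no numerical integration over multiple points). *)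

(* Defs.v *)
From HB Require Import structures.
From mathcomp Require Import all_boot all_order all_algebra.
From mathcomp Require Import all_classical all_reals all_analysis.
Set Implicit Arguments. Unset Strict Implicit. Unset Printing Implicit Defensive.
Import Order.TTheory GRing.Theory Num.Theory.
Import numFieldNormedType.Exports.
Local Open Scope classical_set_scope.
Local Open Scope ring_scope.

(* Vectors of R^n are row vectors 'rV[R]_n; coordinate i is x ord0 i. *)

Definition partial {R : realType} {n : nat} (F : 'rV[R]_n -> R) (i : 'I_n)
  (y : 'rV[R]_n) : R := 'D_(delta_mx ord0 i) F y.

(* Integrand of Integrated Gradients along the straight path alpha |-> alpha x
   from the zero baseline: dF/dx_i (alpha x) * x_i. *)
Definition IG_integrand {R : realType} {n : nat} (F : 'rV[R]_n -> R)
  (x : 'rV[R]_n) (i : 'I_n) (a : R) : R := partial F i (a *: x) * x ord0 i.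

Definition IG0 {R : realType} {n : nat} (F : 'rV[R]_n -> R)
  (x : 'rV[R]_n) (i : 'I_n) : R :=
  Rintegral (@lebesgue_measure R) `[0%R, 1%R] (IG_integrand F x i).

(* Main.v *)
Require Import Defs.
From HB Require Import structures.
From mathcomp Require Import all_boot all_order all_algebra.
From mathcomp Require Import all_classical all_reals all_analysis.
Import Order.TTheory GRing.Theory Num.Theory.
Import numFieldNormedType.Exports.
Local Open Scope classical_set_scope.
Local Open Scope ring_scope.
From mathcomp Require Import ring measurable_realfun.

Lemma partial_hom (R : realType) (n : nat) (F : 'rV[R]_n -> R) (k : R)
  (hdiff : forall x : 'rV[R]_n, differentiable F x)
  (hhom : forall (x : 'rV[R]_n) (a : R), 0 < a -> F (a *: x) = a `^ k * F x)
  (x : 'rV[R]_n) (i : 'I_n) (a : R) : 0 < a ->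
  partial F i (a *: x) = a `^ (k - 1) * partial F i x.
Proof.
move=> a0; rewrite /partial; set v := delta_mx ord0 i.
have h1 : 'D_(a *: v) F (a *: x) = a `^ k * 'D_v F x.
  rewrite -[_ * _]/(a `^ k *: 'D_v F x) -deriveZ; last exact: diff_derivable.
  have E : forall h : R, (F \o shift (a *: x)) (h *: (a *: v)) - F (a *: x)
     = ((a `^ k \*: F) \o shift x) (h *: v) - (a `^ k \*: F) x.
    move=> h; rewrite /shift /= scalerA mulrC -scalerA -scalerDr !hhom //.
  by rewrite /derive; under eq_fun do rewrite E.
have h2 : 'D_(a *: v) F (a *: x) = a * 'D_v F (a *: x).
  by rewrite !deriveE // linearZ.
have an0 : a != 0 by rewrite gt_eqF.
apply: (@mulfI _ a); first exact: an0.
 rewrite -h2 h1 mulrA; congr (_ * _).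
rewrite powRB ?an0 ?implybT // powRr1 ?ltW //.
by rewrite mulrC divfK // gt_eqF // powR_gt0.
Qed.
Section S.
Variable R : realType.
Notation mu := (@lebesgue_measure R).

Lemma powR_cont_at1 (p : R) : (fun a : R => a `^ p) @ (1:R)^'- --> 1 `^ p.
Proof.
apply: cvg_at_left_filter.
have /differentiable_continuous : differentiable (fun a : R => a `^ p) (1:R).
  by apply/derivable1_diffP; apply: derivable_powR; rewrite in_itv /= andbT.
exact.
Qed.

Lemma powR_cont_at0 (p : R) : 0 <= p -> (fun a : R => a `^ p) @ (0:R)^'+ --> 0 `^ p.
Proof.
rewrite le_eqVlt => /orP[/eqP<-|p0].
  rewrite powRr0; apply: cvg_near_cst; near=> a; exact: powRr0.
by rewrite powR0 ?gt_eqF //; exact: powR_cvg0.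
Unshelve. all: by end_near. Qed.

Lemma int_pow (k c : R) : 1 <= k ->
  mu.-integrable `[0, 1] (EFin \o (fun a => c * a `^ (k - 1))) /\
  (\int[mu]_(a in `[0%R, 1%R]) (c * a `^ (k - 1))%:E = (c / k)%:E)%E.
Proof.
move=> k1; have k0 : 0 < k by apply: lt_le_trans k1.
have kk : 0 <= k - 1 by rewrite subr_ge0.
have cf : {within `[0, 1], continuous (fun a => c * a `^ (k - 1))}.
  apply: derivable_oo_LRcontinuous_within; split.
  - move=> a a01; apply: derivableM; first exact: derivable_cst.
    apply: derivable_powR; move: a01; rewrite !in_itv /= => /andP[-> _] //.
  - by apply: cvgMr; exact: powR_cont_at0.
  - by apply: cvgMr; exact: powR_cont_at1.
split.
  by apply: continuous_compact_integrable => //; exact: segment_compact.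
rewrite (@continuous_FTC2 _ _ (fun a => (c / k) * a `^ k)) //.
- rewrite powR1 powR0 ?gt_eqF // mulr1 mulr0.
  by rewrite sube0.
- split.
  + move=> a a01; apply: derivableM; first exact: derivable_cst.
    apply: derivable_powR; move: a01; rewrite !in_itv /= => /andP[-> _] //.
  + by apply: cvgMr; apply: powR_cont_at0; exact: ltW.
  + by apply: cvgMr; exact: powR_cont_at1.
- move=> a; rewrite in_itv /= => /andP[a0 _].
  rewrite derive1E deriveM //; last first.
    by apply: derivable_powR; rewrite in_itv /= a0.
  rewrite derive_cst scaler0 addr0.
  have := is_derive1_powR k a0 => /(@derive_val _ _ _ _ _ _ _).
  move=> ->.
  by rewrite /GRing.scale /= mulrA divfK ?gt_eqF.
Qed.
End S.

Theorem proposition3p2 (R : realType) (n : nat) (F : 'rV[R]_n -> R) (k : R)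
  (hdiff : forall x : 'rV[R]_n, differentiable F x)
  (hk : 1 <= k)
  (hhom : forall (x : 'rV[R]_n) (a : R), 0 < a -> F (a *: x) = a `^ k * F x) :
  forall (x : 'rV[R]_n) (i : 'I_n),
    (@lebesgue_measure R).-integrable `[0%R, 1%R] (fun a => (IG_integrand F x i a)%:E) /\
    IG0 F x i = x ord0 i * partial F i x / k.
Proof.
move=> x i.
set c := partial F i x * x ord0 i.
have [intf eqf] := @int_pow R k c hk.
set D : set (measurableTypeR R) := `[0%R, 1%R]%classic.
have D0 : D 0 by rewrite /D /= in_itv /= lexx ler01.
have mD : measurable D by exact: measurable_itv.
have mD1 : measurable (D `\ 0%R) by apply: measurableD.
have Eq : {in D `\ 0%R, forall a, IG_integrand F x i a = c * a `^ (k - 1)}.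
  move=> a; rewrite inE /D /= in_itv /= => -[/andP[a0 _] an0].
  have ap : 0 < a by rewrite lt_neqAle eq_sym; apply/andP; split => //; apply/eqP.
  rewrite /IG_integrand (@partial_hom R n F k hdiff hhom) // /c; ring.
have mf := measurable_int _ intf.
have mf1 : measurable_fun (D `\ 0%R) (EFin \o (fun a => c * a `^ (k - 1))).
  exact: measurable_funS mf.
have mg1 : measurable_fun (D `\ 0%R) (EFin \o IG_integrand F x i).
  by apply: eq_measurable_fun mf1 => a aD; rewrite /= Eq.
have mg : measurable_fun D (EFin \o IG_integrand F x i).
  rewrite -(setD1K D0) measurable_funU //; split => //.
  exact: measurable_fun_set1.
have int1 : (@lebesgue_measure R).-integrable (D `\ 0%R) (EFin \o IG_integrand F x i).
  have intf1 : (@lebesgue_measure R).-integrable (D `\ 0%R) (EFin \o (fun a => c * a `^ (k - 1))).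
    exact: integrableS intf.
  apply: (eq_integrable mD1 _ _ _ intf1).
  by move=> a aD; rewrite /= Eq.
split.
  have := @negligible_integrable _ _ _ (@lebesgue_measure R) D [set 0%R]
    (EFin \o IG_integrand F x i) (measurable_set1 _) mD mg (lebesgue_measure_set1 _).
  by move=> ->.
rewrite /IG0 /Rintegral -/D -(@integral_setD1 R _ 0%R D mD1 mg1).
rewrite [X in fine X](_ : _ = \int[@lebesgue_measure R]_(a in D `\ 0%R)
   (EFin \o (fun a => (c * a `^ (k - 1))%R)) a)%E; last first.
  by apply: eq_integral => a aD; rewrite /= Eq.
rewrite (@integral_setD1 R _ 0%R D mD1 mf1).
rewrite [X in fine X](_ : _ = (c / k)%:E)%E; last exact: eqf.
rewrite /= /c.
by rewrite [partial F i x * _]mulrC.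
Qed.
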